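(* Let $\mathbf{V}$ be a vertical weak adhesive HLR category with respect to a stable system of monics $\mathcal{M}$. If pushouts along $\mathcal{M}$-morphisms are stable under pullbacks in $\mathbf{V}$, then $\mathbf{V}$ is also a horizontal weak adhesive HLR category with respect to $\mathcal{M}$ (and hence a weak adhesive HLR category).
   Context: A stable system of monics $\mathcal{M}$: class of monomorphisms containing all isomorphisms, closed under composition, stable under pullback. Van Kampen (VK) square: a pushout square (bottom face) such that for every commutative cube over it whose two back vertical faces (those containing the vertical morphism into the apex of the span) are pullbacks, the top face is a pushout iff the two front vertical faces are pullbacks. A vertical weak VK square: the same condition required only for cubes whose four vertical morphisms are in $\mathcal{M}$. $\mathbf{V}$ is a vertical weak adhesive HLR category w.r.t. $\mathcal{M}$ if (V-i) it has pullbacks of cospans $A\to B\leftarrow B'$ with $B'\to B$ in $\mathcal{M}$, (V-ii) it has pushouts of spans $A\leftarrow B\to B'$ with $B\to B'$ in $\mathcal{M}$, and in such pushouts the morphism opposite to the $\mathcal{M}$-leg is in $\mathcal{M}$, (V-iii) pushouts along $\mathcal{M}$-morphisms are vertical weak VK squares. It is a horizontal weak adhesive HLR category w.r.t. $\mathcal{M}$ if it satisfies (V-i), (V-ii) and (H-iii): every pushout square all four of whose morphisms are in $\mathcal{M}$ is a VK square. A weak adhesive HLR category is one that is both. ''Pushouts along $\mathcal{M}$-morphisms are stable under pullbacks'': for every commutative cube whose bottom face is a pushout of a span with one leg in $\mathcal{M}$ and whose four vertical faces are pullbacks (vertical morphisms arbitrary), the top face is a pushout. *)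

(* Defs.v *)
Set Implicit Arguments.
Unset Strict Implicit.

Record Category := {
  Ob :> Type;
  Hom : Ob -> Ob -> Type;
  idm : forall A, Hom A A;
  comp : forall A B C, Hom B C -> Hom A B -> Hom A C;
  comp_assoc : forall A B C D (h : Hom C D) (g : Hom B C) (f : Hom A B),
      comp h (comp g f) = comp (comp h g) f;
  comp_id_l : forall A B (f : Hom A B), comp (idm B) f = f;
  comp_id_r : forall A B (f : Hom A B), comp f (idm A) = f
}.

Arguments Hom {_} _ _.
Arguments idm {_} _.
Arguments comp {_ _ _ _} _ _.

Section Cat.
Variable C : Category.

Definition MorClass := forall A B : C, @Hom C A B -> Prop.

Definition is_mono {A B : C} (f : Hom A B) : Prop :=
  forall Z (g h : Hom Z A), comp f g = comp f h -> g = h.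

Definition is_iso {A B : C} (f : Hom A B) : Prop :=
  exists g : Hom B A, comp g f = idm A /\ comp f g = idm B.

(** A square
<<
      A --f--> B
      |        |
      g        h
      v        v
      C --k--> D
>>  *)
Record Square := mkSquare {
  sA : C; sB : C; sC : C; sD : C;
  sf : Hom sA sB; sg : Hom sA sC; sh : Hom sB sD; sk : Hom sC sD
}.

Definition commutes (S : Square) : Prop := comp (sh S) (sf S) = comp (sk S) (sg S).

Definition is_pullback (S : Square) : Prop :=
  commutes S /\
  forall Z (p : Hom Z (sB S)) (q : Hom Z (sC S)),
    comp (sh S) p = comp (sk S) q ->
    exists u : Hom Z (sA S),
      (comp (sf S) u = p /\ comp (sg S) u = q) /\
      forall u' : Hom Z (sA S), comp (sf S) u' = p -> comp (sg S) u' = q -> u' = u.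

Definition is_pushout (S : Square) : Prop :=
  commutes S /\
  forall Z (p : Hom (sB S) Z) (q : Hom (sC S) Z),
    comp p (sf S) = comp q (sg S) ->
    exists u : Hom (sD S) Z,
      (comp u (sh S) = p /\ comp u (sk S) = q) /\
      forall u' : Hom (sD S) Z, comp u' (sh S) = p -> comp u' (sk S) = q -> u' = u.

(** A cube: top face [ctop], bottom face [cbot], and vertical morphisms from
    the top to the bottom.  The apex of the spans is the corner [sA]. *)
Record Cube := mkCube {
  ctop : Square; cbot : Square;
  va : Hom (sA ctop) (sA cbot);
  vb : Hom (sB ctop) (sB cbot);
  vc : Hom (sC ctop) (sC cbot);
  vd : Hom (sD ctop) (sD cbot)
}.

Definition back1 (Q : Cube) : Square :=
  mkSquare (sf (ctop Q)) (va Q) (vb Q) (sf (cbot Q)).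
Definition back2 (Q : Cube) : Square :=
  mkSquare (sg (ctop Q)) (va Q) (vc Q) (sg (cbot Q)).
Definition front1 (Q : Cube) : Square :=
  mkSquare (sh (ctop Q)) (vb Q) (vd Q) (sh (cbot Q)).
Definition front2 (Q : Cube) : Square :=
  mkSquare (sk (ctop Q)) (vc Q) (vd Q) (sk (cbot Q)).

Definition cube_commutes (Q : Cube) : Prop :=
  commutes (ctop Q) /\ commutes (cbot Q) /\
  commutes (back1 Q) /\ commutes (back2 Q) /\
  commutes (front1 Q) /\ commutes (front2 Q).

Variable M : MorClass.

Definition stable_system : Prop :=
  (forall A B (f : Hom A B), M f -> is_mono f) /\
  (forall A B (f : Hom A B), is_iso f -> M f) /\
  (forall A B D (f : Hom A B) (g : Hom B D), M f -> M g -> M (comp g f)) /\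
  (forall S : Square, is_pullback S -> M (sk S) -> M (sf S)).

Definition VK_cond (P : Cube -> Prop) (S : Square) : Prop :=
  is_pushout S /\
  forall Q : Cube, cbot Q = S -> cube_commutes Q -> P Q ->
    is_pullback (back1 Q) -> is_pullback (back2 Q) ->
    (is_pushout (ctop Q) <-> (is_pullback (front1 Q) /\ is_pullback (front2 Q))).

Definition is_VK (S : Square) : Prop := VK_cond (fun _ => True) S.

Definition vertical_M (Q : Cube) : Prop :=
  M (va Q) /\ M (vb Q) /\ M (vc Q) /\ M (vd Q).

Definition is_vertical_weak_VK (S : Square) : Prop := VK_cond vertical_M S.

Definition has_M_pullbacks : Prop :=
  forall (B D Cc : C) (h : Hom B D) (k : Hom Cc D), M h ->
    exists (P : C) (p1 : Hom P B) (p2 : Hom P Cc),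
      is_pullback (mkSquare p1 p2 h k).

Definition has_M_pushouts : Prop :=
  (forall (A B Cc : C) (f : Hom A B) (g : Hom A Cc), M f ->
    exists (P : C) (q1 : Hom B P) (q2 : Hom Cc P),
      is_pushout (mkSquare f g q1 q2)) /\
  (forall S : Square, is_pushout S -> M (sf S) -> M (sk S)).

Definition pushout_along_M (S : Square) : Prop :=
  is_pushout S /\ (M (sf S) \/ M (sg S)).

Definition V_iii : Prop :=
  forall S : Square, pushout_along_M S -> is_vertical_weak_VK S.

Definition H_iii : Prop :=
  forall S : Square, is_pushout S ->
    M (sf S) -> M (sg S) -> M (sh S) -> M (sk S) -> is_VK S.

Definition vertical_weak_adhesive_HLR : Prop :=
  has_M_pullbacks /\ has_M_pushouts /\ V_iii.

Definition horizontal_weak_adhesive_HLR : Prop :=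
  has_M_pullbacks /\ has_M_pushouts /\ H_iii.

Definition weak_adhesive_HLR : Prop :=
  vertical_weak_adhesive_HLR /\ horizontal_weak_adhesive_HLR.

Definition M_pushouts_stable_under_pullbacks : Prop :=
  forall Q : Cube, cube_commutes Q -> pushout_along_M (cbot Q) ->
    is_pullback (back1 Q) -> is_pullback (back2 Q) ->
    is_pullback (front1 Q) -> is_pullback (front2 Q) ->
    is_pushout (ctop Q).

End Cat.

(* Main.v *)
Require Import Defs.

Lemma pb_transpose (C : Category) (A B Cc D : C) (f : Hom A B) (g : Hom A Cc)
  (h : Hom B D) (k : Hom Cc D) :
  is_pullback (mkSquare f g h k) -> is_pullback (mkSquare g f k h).
Proof.
  intros [Hc Hu]; unfold commutes in *; simpl in *; split; [simpl; now symmetry|].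
  simpl; intros Z p q E.
  destruct (Hu Z q p (eq_sym E)) as [u [[E1 E2] U]].
  exists u; split; [split; assumption|].
  intros u' H1 H2; apply U; assumption.
Qed.

Arguments pb_transpose {C A B Cc D f g h k} _.

Lemma po_transpose (C : Category) (A B Cc D : C) (f : Hom A B) (g : Hom A Cc)
  (h : Hom B D) (k : Hom Cc D) :
  is_pushout (mkSquare f g h k) -> is_pushout (mkSquare g f k h).
Proof.
  intros [Hc Hu]; unfold commutes in *; simpl in *; split; [simpl; now symmetry|].
  simpl; intros Z p q E.
  destruct (Hu Z q p (eq_sym E)) as [u [[E1 E2] U]].
  exists u; split; [split; assumption|].
  intros u' H1 H2; apply U; assumption.
Qed.

Arguments po_transpose {C A B Cc D f g h k} _.

Lemma front1_lemma (C : Category) (M : MorClass C) :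
  stable_system M -> has_M_pullbacks M -> M_pushouts_stable_under_pullbacks M ->
  forall (A' B' C' D' A B Cc D : C)
    (f' : Hom A' B') (g' : Hom A' C') (h' : Hom B' D') (k' : Hom C' D')
    (f : Hom A B) (g : Hom A Cc) (h : Hom B D) (k : Hom Cc D)
    (a : Hom A' A) (b : Hom B' B) (c : Hom C' Cc) (d : Hom D' D),
  is_pullback (mkSquare f g h k) -> M _ _ h -> M _ _ h' -> M _ _ f' -> M _ _ g' ->
  is_pullback (mkSquare f' a b f) -> is_pullback (mkSquare g' a c g) ->
  is_pushout (mkSquare f' g' h' k') ->
  comp d h' = comp h b -> comp d k' = comp k c ->
  is_pullback (mkSquare h' b d h).
Proof.
  intros [Hmono [Hiso [Hcomp Hpbst]]] HPB HSTAB A' B' C' D' A B Cc D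
    f' g' h' k' f g h k a b c d Hbpb Hh Hh' Hf' Hg' Hb1 Hb2 Htop Ef1 Ef2.
  destruct (HPB _ _ _ h d Hh) as (P & pB & h'' & HP).
  assert (Hh'' : M _ _ h'') by exact (Hpbst _ (pb_transpose HP) Hh).
  pose proof (Hmono _ _ _ Hh'') as Mh''.
  pose proof (Hmono _ _ _ Hh') as Mh'.
  pose proof (Hmono _ _ _ Hg') as Mg'.
  destruct HP as [HPc HPu]; unfold commutes in HPc; simpl in HPc, HPu.
  destruct (HPu _ b h' (eq_sym Ef1)) as [b0 [[Eb0 Eb0'] _]].
  destruct Htop as [Htc Htu]; unfold commutes in Htc; simpl in Htc, Htu.
  destruct Hb1 as [Hb1c _]; unfold commutes in Hb1c; simpl in Hb1c.
  destruct Hb2 as [Hb2c Hb2u]; unfold commutes in Hb2c; simpl in Hb2c, Hb2u.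
  destruct Hbpb as [Hbc Hbu]; simpl in Hbu.
  set (W := @mkCube _ (mkSquare f' (idm A') b0 (comp b0 f')) (mkSquare f' g' h' k')
                   (idm A') (idm B') g' h'').
  assert (HW : is_pushout (ctop W)).
  { apply HSTAB.
    - unfold cube_commutes, commutes; simpl.
      repeat split.
      + now rewrite ?comp_id_l, ?comp_id_r.
      + exact Htc.
      + now rewrite ?comp_id_l, ?comp_id_r.
      + now rewrite ?comp_id_l, ?comp_id_r.
      + rewrite comp_assoc, Eb0'. exact Htc.
    - split; [split; [exact Htc|exact Htu]|left; simpl; exact Hf'].
    - split; [unfold commutes; simpl; now rewrite comp_id_l, comp_id_r|].
      simpl; intros Z p q E. exists q. rewrite comp_id_l in E.
      split; [split; [now symmetry | apply comp_id_l]|].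
      intros u' _ H2; now rewrite comp_id_l in H2.
    - split; [unfold commutes; simpl; reflexivity|].
      simpl; intros Z p q E. exists p.
      assert (p = q) by (apply Mg'; exact E). subst q.
      split; [split; apply comp_id_l|].
      intros u' H1 _; now rewrite comp_id_l in H1.
    - split; [unfold commutes; simpl; now rewrite Eb0', comp_id_r|].
      simpl; intros Z p q E. exists q.
      split; [split; [|apply comp_id_l]|].
      + apply Mh''. rewrite comp_assoc, Eb0'. now symmetry.
      + intros u' _ H2; now rewrite comp_id_l in H2.
    - split; [unfold commutes; simpl; rewrite comp_assoc, Eb0'; exact Htc|].
      simpl; intros Z p q E.
      assert (E2 : comp h (comp pB p) = comp k (comp c q)).
      { rewrite !comp_assoc, HPc, <- Ef2, <- !comp_assoc, E. reflexivity. }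
      destruct (Hbu Z _ _ E2) as [w [[Ew1 Ew2] _]].
      destruct (Hb2u Z q w (eq_sym Ew2)) as [u [[Eu1 Eu2] _]].
      exists u. split; [split; [|exact Eu1]|].
      + assert (Ec : comp h (comp pB p) = comp d (comp h'' p))
          by (rewrite !comp_assoc, HPc; reflexivity).
        destruct (HPu Z _ _ Ec) as [v [_ Uv]].
        transitivity v; [|symmetry; apply Uv; reflexivity].
        apply Uv.
        * rewrite !comp_assoc, Eb0, Hb1c, <- comp_assoc, Eu2. exact Ew1.
        * rewrite !comp_assoc, Eb0', Htc, <- comp_assoc, Eu1. now symmetry.
      + intros u' _ H2. apply Mg'. now rewrite H2, Eu1. }
  destruct HW as [_ HWu]; simpl in HWu.
  destruct (HWu B' (idm B') f') as [r [[Er1 Er2] _]].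
  { now rewrite comp_id_l, comp_id_r. }
  assert (Er3 : comp b0 r = idm P).
  { destruct (HWu P b0 (comp b0 f')) as [s [_ Us]].
    { now rewrite comp_id_r. }
    transitivity s; [|symmetry]; apply Us.
    - now rewrite <- comp_assoc, Er1, comp_id_r.
    - now rewrite <- comp_assoc, Er2.
    - apply comp_id_l.
    - apply comp_id_l. }
  split; [unfold commutes; simpl; exact Ef1|].
  simpl; intros Z p q E.
  destruct (HPu Z q p (eq_sym E)) as [z [[Ez1 Ez2] _]].
  exists (comp r z). split; [split|].
  - rewrite <- Eb0', <- comp_assoc, (comp_assoc b0 r z), Er3, comp_id_l. exact Ez2.
  - rewrite <- Eb0, <- comp_assoc, (comp_assoc b0 r z), Er3, comp_id_l. exact Ez1.
  - intros u' H1 _. apply Mh'. rewrite H1.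
    rewrite <- Eb0', <- comp_assoc, (comp_assoc b0 r z), Er3, comp_id_l. now symmetry.
Qed.

Theorem mainTheorem10 (C : Category) (M : MorClass C) :
  stable_system M ->
  vertical_weak_adhesive_HLR M ->
  M_pushouts_stable_under_pullbacks M ->
  horizontal_weak_adhesive_HLR M /\ weak_adhesive_HLR M.
Proof.
  intros Hst [HPB [HPO HV]] HSTAB.
  pose proof Hst as [Hmono [Hiso [Hcomp Hpbst]]].
  assert (Mid : forall X : C, M _ _ (idm X)).
  { intro X; apply Hiso; exists (idm X); split; apply comp_id_l. }
  assert (HH : H_iii M).
  { intros S HS Hf Hg Hh Hk.
    destruct S as [A B Cc D f g h k]; simpl in *.
    assert (Hbpb : is_pullback (mkSquare f g h k)).
    { destruct (HV _ (conj HS (or_introl Hf))) as [_ HVK].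
      pose (Q0 := @mkCube _ (mkSquare (idm A) g g (idm Cc)) (mkSquare f g h k)
                  (idm A) f (idm Cc) k).
      destruct HS as [HSc HSu]; unfold commutes in HSc; simpl in HSc.
      assert (Hm := Hmono _ _ _ Hf).
      destruct (HVK Q0 eq_refl) as [H1 _].
      - unfold cube_commutes, commutes; simpl; repeat split;
          rewrite ?comp_id_l, ?comp_id_r; auto.
      - unfold vertical_M; simpl; auto.
      - split; [unfold commutes; simpl; reflexivity|].
        simpl; intros Z p q E. exists p.
        assert (p = q) by (apply Hm; exact E). subst q.
        split; [split; apply comp_id_l|].
        intros u' H1 _; now rewrite comp_id_l in H1.
      - split; [unfold commutes; simpl; now rewrite comp_id_l, comp_id_r|].
        simpl; intros Z p q E. exists q. rewrite comp_id_l in E.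
        split; [split; [now symmetry | apply comp_id_l]|].
        intros u' _ H2; now rewrite comp_id_l in H2.
      - apply pb_transpose. apply H1.
        split; [unfold commutes; simpl; now rewrite comp_id_l, comp_id_r|].
        simpl; intros Z p q E. exists q. rewrite comp_id_r in E.
        split; [split; [now symmetry | apply comp_id_r]|].
        intros u' _ H2; now rewrite comp_id_r in H2. }
    split; [exact HS|].
    intros Q HQ Hcc _ Hb1 Hb2.
    destruct Q as [top bot a b c d]; simpl in HQ; subst bot.
    destruct top as [A' B' C' D' f' g' h' k'].
    unfold back1, back2, front1, front2 in *; simpl in *.
    destruct Hcc as [Htc [_ [_ [_ [Ef1 Ef2]]]]]; unfold commutes in *; simpl in *.
    split.
    - intro Htop.
      assert (Hf' : M _ _ f') by exact (Hpbst _ Hb1 Hf).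
      assert (Hg' : M _ _ g') by exact (Hpbst _ Hb2 Hg).
      assert (Hk' : M _ _ k') by exact (proj2 HPO _ Htop Hf').
      assert (Hh' : M _ _ h') by exact (proj2 HPO _ (po_transpose Htop) Hg').
      split.
      + eapply front1_lemma; eauto.
      + eapply front1_lemma with (f' := g') (g' := f') (f := g) (g := f) (h := k) (k := h);
          eauto using pb_transpose, po_transpose.
    - intros [Hf1 Hf2].
      exact (HSTAB (@mkCube _ (mkSquare f' g' h' k') (mkSquare f g h k) a b c d)
        (conj Htc (conj (proj1 HS) (conj (proj1 Hb1) (conj (proj1 Hb2)
          (conj (proj1 Hf1) (proj1 Hf2))))))
        (conj HS (or_introl Hf)) Hb1 Hb2 Hf1 Hf2). }
  split; split; auto; split; auto.
Qed.
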